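(* Let $(A,d)$ be a metric space and $\rho:[0,1]\to[0,1]$ an ndrc grey level map with $\rho(0)=0$. Then for all $u,v\in\mathcal F_A^*$, $$\sup_{\alpha\in[0,1]}h([\rho(u)]^\alpha,[\rho(v)]^\alpha)\le d_\infty(u,v),$$ with the convention $h(\emptyset,\emptyset)=0$ (for $\alpha>\rho(1)$ both $\alpha$-cuts are empty); i.e. $d_\infty(\rho(u),\rho(v))\le d_\infty(u,v)$.
   Context: A fuzzy subset of $A$ is a function $u:A\to[0,1]$. For $\alpha\in(0,1]$, $[u]^\alpha=\{x:u(x)\ge\alpha\}$, $[u]^0=\overline{\{x:u(x)>0\}}$. $\mathcal F_A^*$ is the set of fuzzy subsets that are normal, usc and compactly supported. $h$ is the Hausdorff metric on nonempty compact sets and $d_\infty(u,v)=\sup_{\alpha\in[0,1]}h([u]^\alpha,[v]^\alpha)$. A grey level map is a non-identically-zero $\rho:[0,1]\to[0,1]$; ndrc means nondecreasing and right continuous; $\rho(u)=\rho\circ u$. *)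

(* Defs.v *)
From Stdlib Require Import Reals Lra ClassicalEpsilon List.
Open Scope R_scope.

Definition is_metric {A : Type} (d : A -> A -> R) : Prop :=
  (forall x y, 0 <= d x y) /\
  (forall x y, d x y = 0 <-> x = y) /\
  (forall x y, d x y = d y x) /\
  (forall x y z, d x z <= d x y + d y z).

(** Supremum of a set of reals; convention 0 if empty or unbounded. *)
Definition Rsup (E : R -> Prop) : R :=
  match excluded_middle_informative (bound E /\ exists x, E x) with
  | left H => proj1_sig (completeness E (proj1 H) (proj2 H))
  | right _ => 0
  end.

Definition Rinf (E : R -> Prop) : R := - Rsup (fun r => E (- r)).

Section Metric.
Context {A : Type} (d : A -> A -> R).

Definition is_open (U : A -> Prop) : Prop :=
  forall x, U x -> exists eps, 0 < eps /\ forall y, d x y < eps -> U y.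

Definition compact (K : A -> Prop) : Prop :=
  forall (I : Type) (U : I -> A -> Prop),
    (forall i, is_open (U i)) ->
    (forall x, K x -> exists i, U i x) ->
    exists l : list I, forall x, K x -> exists i, In i l /\ U i x.

Definition closure (S : A -> Prop) : A -> Prop :=
  fun x => forall eps, 0 < eps -> exists y, S y /\ d x y < eps.

(** distance from a point to a set, and Hausdorff distance
    (with h(empty,empty) = 0 by the sup convention). *)
Definition dist_pt (x : A) (L : A -> Prop) : R :=
  Rinf (fun r => exists y, L y /\ r = d x y).

Definition hausdorff (K L : A -> Prop) : R :=
  Rmax (Rsup (fun r => exists x, K x /\ r = dist_pt x L))
       (Rsup (fun r => exists y, L y /\ r = dist_pt y K)).

Definition cut (u : A -> R) (alpha : R) : A -> Prop :=
  fun x => if Rlt_dec 0 alpha then alpha <= u x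
           else closure (fun y => 0 < u y) x.

Definition is_fuzzy (u : A -> R) : Prop := forall x, 0 <= u x <= 1.
Definition normal (u : A -> R) : Prop := exists x, u x = 1.
Definition usc (u : A -> R) : Prop :=
  forall x eps, 0 < eps -> exists delta, 0 < delta /\
    forall y, d x y < delta -> u y < u x + eps.

Definition in_FA_star (u : A -> R) : Prop :=
  is_fuzzy u /\ normal u /\ usc u /\ compact (cut u 0).

Definition d_infty (u v : A -> R) : R :=
  Rsup (fun r => exists alpha, 0 <= alpha <= 1 /\
                   r = hausdorff (cut u alpha) (cut v alpha)).
End Metric.

(** Grey level maps rho : [0,1] -> [0,1] (represented on R, only values on
    [0,1] matter). *)
Definition grey_level_map (rho : R -> R) : Prop :=
  (forall t, 0 <= t <= 1 -> 0 <= rho t <= 1) /\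
  (exists t, 0 <= t <= 1 /\ rho t <> 0).

Definition ndrc (rho : R -> R) : Prop :=
  (forall s t, 0 <= s <= t -> t <= 1 -> rho s <= rho t) /\
  (forall t, 0 <= t < 1 -> forall eps, 0 < eps -> exists delta, 0 < delta /\
     forall s, t <= s <= 1 -> s < t + delta -> Rabs (rho s - rho t) < eps).

(* Main.v *)
Require Import Defs.
From Stdlib Require Import Reals Lra Classical ClassicalEpsilon List.
Open Scope R_scope.

Lemma Rsup_spec (E : R -> Prop) : bound E -> (exists x, E x) -> is_lub E (Rsup E).
Proof.
  intros Hb He. unfold Rsup.
  destruct excluded_middle_informative as [a|n].
  - destruct (completeness E (proj1 a) (proj2 a)) as [m Hm]. simpl. exact Hm.
  - exfalso; tauto.
Qed.

Lemma Rsup_nd (E : R -> Prop) : ~ (bound E /\ exists x, E x) -> Rsup E = 0.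
Proof.
  intros n. unfold Rsup.
  destruct excluded_middle_informative as [a|n']; [tauto|reflexivity].
Qed.

Lemma Rsup_le (E : R -> Prop) (D : R) : (forall r, E r -> r <= D) -> 0 <= D -> Rsup E <= D.
Proof.
  intros H H0.
  destruct (classic (exists x, E x)) as [He|He].
  - assert (Hb : bound E) by (exists D; exact H).
    destruct (Rsup_spec E Hb He) as [_ Hl]. apply Hl. exact H.
  - rewrite Rsup_nd; [lra|tauto].
Qed.

Lemma Rsup_ub (E : R -> Prop) r : bound E -> E r -> r <= Rsup E.
Proof.
  intros Hb Hr. destruct (Rsup_spec E Hb (ex_intro _ r Hr)) as [Hu _]. apply Hu; exact Hr.
Qed.

Lemma Rsup_ge0 (E : R -> Prop) : (forall r, E r -> 0 <= r) -> 0 <= Rsup E.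
Proof.
  intros H.
  destruct (classic (bound E /\ exists x, E x)) as [[Hb [x Hx]]|n].
  - apply Rle_trans with x; [apply H; exact Hx| apply Rsup_ub; auto].
  - rewrite Rsup_nd; [lra|tauto].
Qed.

Section S.
Context {A : Type} (d : A -> A -> R) (Hd : is_metric d).

Lemma d_pos x y : 0 <= d x y. Proof. destruct Hd as [H _]; apply H. Qed.
Lemma d_refl x : d x x = 0. Proof. destruct Hd as [_ [H _]]; apply H; reflexivity. Qed.
Lemma d_sym x y : d x y = d y x. Proof. destruct Hd as [_ [_ [H _]]]; apply H. Qed.
Lemma d_tri x y z : d x z <= d x y + d y z. Proof. destruct Hd as [_ [_ [_ H]]]; apply H. Qed.

Lemma dist_le x (L : A -> Prop) y : L y -> dist_pt d x L <= d x y.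
Proof.
  intros Hy. unfold dist_pt, Rinf.
  assert (Rsup (fun r => exists y, L y /\ - r = d x y) >= - d x y); [|lra].
  apply Rle_ge, Rsup_ub.
  - exists 0. intros r [z [_ Hz]]. pose proof (d_pos x z). lra.
  - exists y. split; auto; lra.
Qed.

Lemma dist_ge0 x L : 0 <= dist_pt d x L.
Proof.
  unfold dist_pt, Rinf.
  assert (Rsup (fun r => exists y, L y /\ - r = d x y) <= 0); [|lra].
  apply Rsup_le; [|lra]. intros r [z [_ Hz]]. pose proof (d_pos x z). lra.
Qed.

Lemma dist_approx x (L : A -> Prop) y0 eps : L y0 -> 0 < eps ->
  exists y, L y /\ d x y < dist_pt d x L + eps.
Proof.
  intros Hy0 He. apply NNPP; intro Hn.
  assert (Hall : forall y, L y -> dist_pt d x L + eps <= d x y).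
  { intros y Hy. apply Rnot_lt_le. intro Hlt. apply Hn. exists y; auto. }
  unfold dist_pt, Rinf in *.
  set (F := fun r => exists y, L y /\ - r = d x y) in *.
  assert (Rsup F <= - (- Rsup F + eps)); [|lra].
  destruct (Rsup_spec F) as [_ Hl].
  - exists 0. intros r [z [_ Hz]]. pose proof (d_pos x z). lra.
  - exists (- d x y0). exists y0. split; auto; lra.
  - apply Hl. intros r [z [Hz Hr]]. specialize (Hall z Hz). lra.
Qed.

Lemma dist_ge x (L : A -> Prop) D :
  (forall eps, 0 < eps -> exists z, L z /\ d x z < D + eps) -> dist_pt d x L <= D.
Proof.
  intros H. apply Rnot_lt_le. intro Hlt.
  destruct (H (dist_pt d x L - D)) as [z [Hz Hxz]]; [lra|].
  pose proof (dist_le x L z Hz). lra.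
Qed.

Lemma dist_le_M x (L : A -> Prop) M : (forall y, L y -> d x y <= M) -> 0 <= M ->
  dist_pt d x L <= M.
Proof.
  intros H H0. destruct (classic (exists y, L y)) as [[y Hy]|n].
  - apply Rle_trans with (d x y); [apply dist_le; auto | auto].
  - unfold dist_pt, Rinf. rewrite Rsup_nd; [lra|].
    intros [_ [r [z [Hz _]]]]. apply n; eauto.
Qed.

Lemma haus_ge0 K L : 0 <= hausdorff d K L.
Proof.
  unfold hausdorff. apply Rle_trans with (2 := Rmax_l _ _).
  apply Rsup_ge0. intros r [x [_ ->]]. apply dist_ge0.
Qed.

Lemma haus_le K L D :
  (forall x, K x -> dist_pt d x L <= D) -> (forall y, L y -> dist_pt d y K <= D) ->
  0 <= D -> hausdorff d K L <= D.
Proof.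
  intros H1 H2 H0. unfold hausdorff. apply Rmax_lub; apply Rsup_le; auto;
  intros r [x [Hx ->]]; auto.
Qed.

Fixpoint lsum (z0 : A) (l : list A) : R :=
  match l with nil => 0 | i :: l' => d i z0 + lsum z0 l' end.

Lemma lsum_in z0 l i : In i l -> d i z0 <= lsum z0 l.
Proof.
  induction l as [|j l IH]; simpl; [tauto|].
  assert (Hp : forall l, 0 <= lsum z0 l).
  { induction l0; simpl; [lra|]. pose proof (d_pos a z0); lra. }
  intros [->|Hi]. - pose proof (Hp l); lra. - pose proof (IH Hi); pose proof (d_pos j z0); lra.
Qed.

Lemma compact_bdd (K : A -> Prop) z0 : Defs.compact d K ->
  exists M, 0 <= M /\ forall x, K x -> d x z0 <= M.
Proof.
  intros Hc.
  destruct (Hc A (fun i y => d i y < 1)) as [l Hl].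
  - intros i y Hy. exists (1 - d i y). split; [lra|].
    intros w Hw. pose proof (d_tri i y w). lra.
  - intros x _. exists x. rewrite d_refl. lra.
  - exists (1 + lsum z0 l). split.
    + assert (Hp : forall l, 0 <= lsum z0 l).
      { induction l0; simpl; [lra|]. pose proof (d_pos a z0); lra. }
      pose proof (Hp l); lra.
    + intros x Hx. destruct (Hl x Hx) as [i [Hi Hix]].
      pose proof (lsum_in z0 l i Hi). pose proof (d_tri x i z0).
      rewrite (d_sym x i) in *. lra.
Qed.

Lemma cut_sub0 (u : A -> R) a x : 0 <= a -> cut d u a x -> cut d u 0 x.
Proof.
  unfold cut. intros Ha. destruct (Rlt_dec 0 0); [lra|].
  destruct (Rlt_dec 0 a); auto.
  intros H eps He. exists x. rewrite d_refl. split; lra.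
Qed.
End S.

Lemma rho_level (rho : R -> R) (Hnd : ndrc rho) (Hrho0 : rho 0 = 0) alpha t0 :
  0 < alpha -> 0 <= t0 <= 1 -> alpha <= rho t0 ->
  exists b, 0 < b <= 1 /\ forall t, 0 <= t <= 1 -> (alpha <= rho t <-> b <= t).
Proof.
  intros Ha Ht0 Hr0. destruct Hnd as [Hmon Hrc].
  set (E := fun r => 0 <= - r <= 1 /\ alpha <= rho (- r)).
  destruct (completeness E) as [m [Hub Hlub]].
  - exists 0. intros r [H _]. lra.
  - exists (- t0). unfold E. rewrite Ropp_involutive. split; [lra|auto].
  - set (b := - m).
    assert (Hlow : forall t, 0 <= t <= 1 -> alpha <= rho t -> b <= t).
    { intros t Ht Hr. assert (E (- t)) by (unfold E; rewrite Ropp_involutive; auto).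
      pose proof (Hub _ H). unfold b; lra. }
    assert (Hglb : forall c, (forall t, 0 <= t <= 1 -> alpha <= rho t -> c <= t) -> c <= b).
    { intros c Hc. assert (m <= - c); [|unfold b; lra].
      apply Hlub. intros r [Hr1 Hr2]. pose proof (Hc _ Hr1 Hr2). lra. }
    assert (Hb0 : 0 <= b) by (apply Hglb; intros; lra).
    assert (Hb1 : b <= 1) by (pose proof (Hlow _ Ht0 Hr0); lra).
    assert (Hbin : alpha <= rho b).
    { destruct (Req_dec b 1) as [E1|N1].
      - pose proof (Hlow _ Ht0 Hr0). assert (t0 = b) by lra. subst t0. auto.
      - apply Rnot_lt_le. intro Hlt.
        destruct (Hrc b (conj Hb0 (ltac:(lra) : b < 1)) (alpha - rho b)) as [dl [Hdl Hc]]; [lra|].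
        assert (~ (b + dl <= b)) by lra.
        assert (Hex : exists s, (0 <= s <= 1 /\ alpha <= rho s) /\ s < b + dl).
        { apply NNPP. intro Hn. apply H. apply Hglb. intros t Ht Hr.
          apply Rnot_lt_le. intro Hlt2. apply Hn. exists t; auto. }
        destruct Hex as [s [[Hs Hrs] Hsl]].
        pose proof (Hlow _ Hs Hrs).
        specialize (Hc s (conj H0 (proj2 Hs)) Hsl).
        apply Rabs_def2 in Hc. lra. }
    exists b. split; [split; [|lra]|].
    + destruct (Rle_lt_or_eq_dec 0 b Hb0) as [|E0]; auto.
      rewrite <- E0, Hrho0 in Hbin. lra.
    + intros t Ht. split; [apply Hlow; auto|].
      intros Hbt. apply Rle_trans with (rho b); auto. apply Hmon; lra.
Qed.

Section M.
Context {A : Type} (d : A -> A -> R) (Hd : is_metric d)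
  (rho : R -> R) (Hrho : grey_level_map rho) (Hnd : ndrc rho) (Hrho0 : rho 0 = 0).

Lemma Qpos (u v : A -> R) (Hu : is_fuzzy u) (Hv : is_fuzzy v) (Hvn : normal v) (D : R)
  (HU : forall b, 0 <= b <= 1 -> forall x, cut d u b x -> dist_pt d x (cut d v b) <= D)
  alpha x : 0 < alpha -> alpha <= rho (u x) ->
  forall eps, 0 < eps -> exists z, alpha <= rho (v z) /\ d x z < D + eps.
Proof.
  intros Ha Hx eps He.
  destruct (rho_level rho Hnd Hrho0 alpha (u x) Ha (Hu x) Hx) as [b [Hb Hiff]].
  assert (Hcx : cut d u b x).
  { unfold cut. destruct (Rlt_dec 0 b); [|lra]. apply Hiff; auto. }
  destruct Hvn as [x0 Hx0].
  assert (Hc0 : cut d v b x0).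
  { unfold cut. destruct (Rlt_dec 0 b); [|lra]. lra. }
  destruct (dist_approx d Hd x (cut d v b) x0 eps Hc0 He) as [z [Hz Hdz]].
  pose proof (HU b (conj (Rlt_le _ _ (proj1 Hb)) (proj2 Hb)) x Hcx).
  exists z. split; [|lra].
  unfold cut in Hz. destruct (Rlt_dec 0 b); [|lra]. apply Hiff; auto.
Qed.

Lemma rho_pos t : 0 <= t <= 1 -> 0 <= rho t <= 1.
Proof. destruct Hrho as [H _]; apply H. Qed.

Lemma Qgen (u v : A -> R) (Hu : is_fuzzy u) (Hv : is_fuzzy v) (Hvn : normal v) (D : R)
  (HU : forall b, 0 <= b <= 1 -> forall x, cut d u b x -> dist_pt d x (cut d v b) <= D)
  alpha x : 0 <= alpha <= 1 -> cut d (fun y => rho (u y)) alpha x ->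
  dist_pt d x (cut d (fun y => rho (v y)) alpha) <= D.
Proof.
  intros Ha Hx. apply dist_ge; auto. intros eps He.
  unfold cut in Hx |- *. destruct (Rlt_dec 0 alpha) as [Hp|Hn].
  - destruct (Qpos u v Hu Hv Hvn D HU alpha x Hp Hx eps He) as [z [Hz Hdz]]. exists z; auto.
  - destruct (Hx (eps/2)) as [y [Hy Hxy]]; [lra|].
    pose proof (rho_pos (u y) (Hu y)).
    destruct (Qpos u v Hu Hv Hvn D HU (rho (u y)) y Hy (Rle_refl _) (eps/2)) as [z [Hz Hyz]]; [lra|].
    exists z. split.
    + intros e' He'. exists z. rewrite d_refl; auto. split; lra.
    + pose proof (d_tri d Hd x y z). lra.
Qed.
End M.

Theorem mainTheorem10 (A : Type) (d : A -> A -> R) (Hd : is_metric d)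
  (rho : R -> R) (Hrho : grey_level_map rho) (Hnd : ndrc rho)
  (Hrho0 : rho 0 = 0)
  (u v : A -> R) (Hu : in_FA_star d u) (Hv : in_FA_star d v) :
  Rsup (fun r => exists alpha, 0 <= alpha <= 1 /\
          r = hausdorff d (cut d (fun x => rho (u x)) alpha)
                          (cut d (fun x => rho (v x)) alpha))
  <= d_infty d u v.
Proof.
  destruct Hu as [Huf [Hun [_ Huc]]]. destruct Hv as [Hvf [Hvn [_ Hvc]]].
  destruct Hun as [z0 Hz0]. destruct Hvn as [z1 Hz1].
  destruct (compact_bdd d Hd _ z0 Huc) as [Mu [HMu Hbu]].
  destruct (compact_bdd d Hd _ z0 Hvc) as [Mv [HMv Hbv]].
  set (M := Mu + Mv).
  assert (HM : forall b x y, 0 <= b -> cut d u b x -> cut d v b y -> d x y <= M /\ d y x <= M).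
  { intros b x y Hb Hx Hy.
    pose proof (Hbu x (cut_sub0 d Hd u b x Hb Hx)).
    pose proof (Hbv y (cut_sub0 d Hd v b y Hb Hy)).
    pose proof (d_tri d Hd x z0 y). pose proof (d_tri d Hd y z0 x).
    rewrite (d_sym d Hd z0 y) in *. rewrite (d_sym d Hd z0 x) in *. unfold M; lra. }
  assert (HM0 : 0 <= M) by (unfold M; lra).
  set (D := d_infty d u v).
  set (S1 := fun b r => exists x, cut d u b x /\ r = dist_pt d x (cut d v b)).
  set (S2 := fun b r => exists y, cut d v b y /\ r = dist_pt d y (cut d u b)).
  assert (HS1 : forall b, 0 <= b -> bound (S1 b)).
  { intros b Hb. exists M. intros r [x [Hx ->]]. apply dist_le_M; auto.
    intros y Hy. apply (HM b x y Hb Hx Hy). }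
  assert (HS2 : forall b, 0 <= b -> bound (S2 b)).
  { intros b Hb. exists M. intros r [y [Hy ->]]. apply dist_le_M; auto.
    intros x Hx. apply (HM b x y Hb Hx Hy). }
  assert (HB : bound (fun r => exists alpha, 0 <= alpha <= 1 /\
                   r = hausdorff d (cut d u alpha) (cut d v alpha))).
  { exists M. intros r [a [Ha ->]]. apply haus_le; auto.
    - intros x Hx. apply dist_le_M; auto. intros y Hy. apply (HM a x y (proj1 Ha) Hx Hy).
    - intros y Hy. apply dist_le_M; auto. intros x Hx. apply (HM a x y (proj1 Ha) Hx Hy). }
  assert (Hhd : forall b, 0 <= b <= 1 -> hausdorff d (cut d u b) (cut d v b) <= D).
  { intros b Hb. apply Rsup_ub; auto. exists b; auto. }
  assert (HD0 : 0 <= D).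
  { apply Rle_trans with (hausdorff d (cut d u 0) (cut d v 0)).
    - apply haus_ge0; auto.
    - apply Hhd; lra. }
  assert (HU1 : forall b, 0 <= b <= 1 -> forall x, cut d u b x -> dist_pt d x (cut d v b) <= D).
  { intros b Hb x Hx. apply Rle_trans with (Rsup (S1 b)).
    - apply Rsup_ub; [apply HS1; lra| exists x; auto].
    - apply Rle_trans with (2 := Hhd b Hb). unfold hausdorff. apply Rmax_l. }
  assert (HU2 : forall b, 0 <= b <= 1 -> forall y, cut d v b y -> dist_pt d y (cut d u b) <= D).
  { intros b Hb y Hy. apply Rle_trans with (Rsup (S2 b)).
    - apply Rsup_ub; [apply HS2; lra| exists y; auto].
    - apply Rle_trans with (2 := Hhd b Hb). unfold hausdorff. apply Rmax_r. }
  apply Rsup_le; auto. intros r [a [Ha ->]]. apply haus_le; auto.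
  - intros x Hx. exact (Qgen d Hd rho Hrho Hnd Hrho0 u v Huf Hvf (ex_intro _ z1 Hz1) D HU1 a x Ha Hx).
  - intros y Hy. exact (Qgen d Hd rho Hrho Hnd Hrho0 v u Hvf Huf (ex_intro _ z0 Hz0) D HU2 a y Ha Hy).
Qed.
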